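(* Let $s$ and $A$ be fixed positive integers, and let $\beta$ be the maximal exponent in the prime factorization of $A$ (with $\beta=0$ if $A=1$). Let $x$ and $n$ be positive integers such that $x$ divides $A^n(n!)^s$. Then for every positive integer $a$, $$x\leq \bigl(a\,\omega(x)+1\bigr)^{n\omega(x)(\beta+s)}\,(An^s)^{n\left(\beta\omega(x)+\frac{s}{a}\right)}.$$ In particular, if $A=1$, then $x\leq (a\omega(x)+1)^{n\omega(x)s}(n^s)^{ns/a}$.
   Context: For a positive integer $x$, $\omega(x)$ denotes the number of distinct prime factors of $x$. *)

(* Defs.v *)
From Stdlib Require Import Reals.
From mathcomp Require Import all_boot.

Definition omega (x : nat) : nat := size (primes x).

Definition maxexp (A : nat) : nat := \max_(p <- primes A) logn p A.

(* Main.v *)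
Require Import Defs.
From Stdlib Require Import Reals.
From mathcomp Require Import all_boot.
From mathcomp Require Import zify.
From Stdlib Require Import Lra.

Lemma prime_dvd_fact_le p n : prime p -> p %| n`! -> p <= n.
Proof.
move=> pp; elim: n => [|n IH]; first by rewrite fact0 dvdn1 => /eqP p1; rewrite p1 in pp.
rewrite factS Euclid_dvdM // => /orP [h|h].
  by apply: dvdn_leq.
by apply: leq_trans (IH h) _.
Qed.

Lemma legendre_aux p N n : 0 < p -> (p - 1) * \sum_(1 <= k < N.+1) n %/ p ^ k <= n.
Proof.
move=> p0; elim: N n => [|N IH] n; first by rewrite big_geq // muln0.
rewrite big_nat_recl //.
have -> : \sum_(1 <= i < N.+1) n %/ p ^ i.+1 = \sum_(1 <= i < N.+1) (n %/ p) %/ p ^ i.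
  by apply: eq_bigr => i _; rewrite expnS divnMA.
have h1 := IH (n %/ p).
have h2 : n %/ p * p <= n by apply: leq_divM.
rewrite expn1.
move: h1 h2; set q := n %/ p; set S := \sum_(1 <= i < N.+1) _.
nia.
Qed.

Lemma legendre n p : prime p -> (p - 1) * logn p n`! <= n.
Proof. by move=> pp; rewrite logn_fact //; apply: legendre_aux; apply: prime_gt0. Qed.

Lemma prodX (r : seq nat) (F : nat -> nat) K : (\prod_(i <- r) F i) ^ K = \prod_(i <- r) F i ^ K.
Proof. by elim: r => [|i r IH]; rewrite ?big_nil ?exp1n // !big_cons expnMn IH. Qed.

Lemma leq_expb m1 m2 e : m1 <= m2 -> m1 ^ e <= m2 ^ e.
Proof. by move=> h; case: e => [|e] //; rewrite leq_exp2r. Qed.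

Lemma main_nat s A x n K : 0 < s -> 0 < A -> 0 < x -> 0 < n -> 0 < K ->
  x %| A ^ n * (n`!) ^ s ->
  x ^ K <= ((K.+1) ^ (n * (maxexp A + s) * K) * (A * n ^ s) ^ (n * maxexp A * K)
            * (A * n ^ s) ^ (n * s)) ^ omega x.
Proof.
move=> s0 A0 x0 n0 K0 hd.
set M := A * n ^ s; set b := maxexp A.
have M0 : 0 < M by rewrite /M muln_gt0 A0 expn_gt0 n0.
rewrite {1}(prod_prime_decomp x0) prime_decompE big_map /= prodX /omega.
rewrite -(card_ord (size (primes x))) -prod_nat_const.
rewrite (big_nth 0) big_mkord.
apply: leq_prod => i _.
set p := nth 0 (primes x) i.
have pin : p \in primes x by apply: mem_nth.
have pp : prime p by move: pin; rewrite mem_primes => /andP [].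
have p1 := prime_gt1 pp.
have pdx : p %| x by move: pin; rewrite mem_primes => /and3P [].
set e := logn p x; set v := logn p n`!.
have N0 : 0 < A ^ n * n`! ^ s by rewrite muln_gt0 !expn_gt0 A0 fact_gt0.
have he : e <= n * logn p A + s * v.
  have := dvdn_leq_log p N0 hd.
  by rewrite lognM ?expn_gt0 ?A0 ?fact_gt0 // !lognX.
have hb : logn p A <= b.
  case pA: (p \in primes A).
    by rewrite /b /maxexp; exact: (@leq_bigmax_seq _ (primes A) xpredT (fun q => logn q A) p pA).
  by move: pA; rewrite -logn_gt0; case: (logn p A).
have hv := @legendre n p pp.
have vn : v <= n by move: hv; rewrite -/v; nia.
have one1 : 1 <= (A * n ^ s) ^ (n * maxexp A * K) * (A * n ^ s) ^ (n * s).
  by rewrite muln_gt0 !expn_gt0 M0.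
case: (leqP p K.+1) => hp.
  have h1 : (p ^ e) ^ K <= K.+1 ^ (n * (b + s) * K).
    rewrite -expnM; apply: leq_trans (@leq_expb _ _ (e * K) hp) _.
    apply: leq_pexp2l => //.
    rewrite leq_pmul2r //. nia.
  rewrite -mulnA; apply: leq_trans h1 _.
  exact: leq_pmulr one1.
have hKv : K * v <= n by nia.
have pM : p <= M.
  have : p %| A ^ n * n`! ^ s by apply: dvdn_trans hd.
  rewrite Euclid_dvdM // !Euclid_dvdX // => /orP [/andP [h _]|/andP [h _]].
    by apply: leq_trans (dvdn_leq A0 h) _; rewrite /M leq_pmulr // expn_gt0 n0.
  have pn := @prime_dvd_fact_le p n pp h.
  apply: leq_trans pn _; rewrite /M.
  have h2 : n <= n ^ s by rewrite -{1}(expn1 n); apply: leq_pexp2l.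
  apply: leq_trans h2 _; exact: leq_pmull.
have h3 : (p ^ e) ^ K <= M ^ (n * b * K) * M ^ (n * s).
  rewrite -expnD -expnM.
  apply: leq_trans (leq_pexp2l (ltnW p1) _) (@leq_expb _ _ _ pM).
  have q1 : e * K <= (n * logn p A + s * v) * K by rewrite leq_pmul2r.
  have q2 : n * logn p A * K <= n * b * K by rewrite leq_pmul2r // leq_pmul2l.
  have q3 : s * (K * v) <= s * n by rewrite leq_pmul2l.
  move: q1 q2 q3; rewrite mulnDl; set l := logn p A; nia.
rewrite -mulnA; apply: leq_trans h3 _.
apply: leq_pmull; by rewrite expn_gt0.
Qed.

Open Scope R_scope.

Lemma INR_muln p q : INR (p * q)%N = INR p * INR q.
Proof. exact: mult_INR. Qed.
Lemma INR_addn p q : INR (p + q)%N = INR p + INR q.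
Proof. exact: plus_INR. Qed.
Lemma INR_expn m k : INR (m ^ k)%N = INR m ^ k.
Proof. elim: k => [|k IH]; first by rewrite expn0. by rewrite expnS INR_muln IH. Qed.

Lemma E2gen c M n w b s K : (c ^ (n * w * (b + s) * K) * M ^ (n * b * K * w + n * s * w) =
  (c ^ (n * (b + s) * K) * M ^ (n * b * K) * M ^ (n * s)) ^ w)%N.
Proof.
rewrite !expnMn -!expnM expnD mulnA.
have -> : (n * w * (b + s) * K = n * (b + s) * K * w)%N by lia.
by [].
Qed.

Lemma pow_lt_strict (Y X : R) (K : nat) : 0 <= Y -> Y < X -> (0 < K)%N -> Y ^ K < X ^ K.
Proof.
move=> Y0 YX; case: K => [|k] // _.
elim: k => [|k IH]; first by rewrite !pow_1.
change (Y * Y ^ k.+1 < X * X ^ k.+1).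
apply: Rle_lt_trans (Rmult_le_compat_l _ _ _ Y0 (Rlt_le _ _ IH)) _.
apply: Rmult_lt_compat_r => //.
apply: pow_lt; lra.
Qed.

Lemma part1 (s A : nat) (hs : (0 < s)%N) (hA : (0 < A)%N) (x n : nat)
  (hx : (0 < x)%N) (hn : (0 < n)%N)
  (hdiv : (x %| A ^ n * (n `!) ^ s)%N) (a : nat) (ha : (0 < a)%N) :
    INR x <= INR (a * omega x + 1)%N ^ (n * omega x * (maxexp A + s))%N
             * Rpower (INR (A * n ^ s)%N)
                      (INR n * (INR (maxexp A * omega x)%N + INR s / INR a)).
Proof.
set w := omega x; set b := maxexp A; set M := (A * n ^ s)%N.
have M0 : (0 < M)%N by rewrite /M muln_gt0 hA expn_gt0 hn.
have M0R : 0 < INR M by apply: lt_0_INR; apply/ltP.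
have M1R : 1 <= INR M by rewrite -INR_1; apply: le_INR; apply/leP.
have ex0 : 0 <= INR n * (INR (b * w) + INR s / INR a).
  apply: Rmult_le_pos; first exact: pos_INR.
  apply: Rplus_le_le_0_compat; first exact: pos_INR.
  apply: Rmult_le_pos; first exact: pos_INR.
  apply: Rlt_le; apply: Rinv_0_lt_compat; apply: lt_0_INR; apply/ltP; exact: ha.
case: (posnP w) => w0.
  have x1 : x = 1%N.
    have : (x < 2)%N by rewrite -primes_eq0; move: w0; rewrite /w /omega; case: (primes x).
    by move=> h2; apply/eqP; rewrite eqn_leq -ltnS h2 hx.
  rewrite x1 w0 !muln0 !mul0n add0n INR_1 pow1 Rmult_1_l.
  rewrite -(Rpower_O _ M0R); apply: Rle_Rpower => //; move: ex0; by rewrite w0 muln0.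
set K := (a * w)%N.
have K0 : (0 < K)%N.
  by rewrite /K muln_gt0 ha.
have hmain := @main_nat s A x n K hs hA hx hn K0 hdiv.
rewrite -/b -/w -/M in hmain.
set Y := (_ * _).
have Y0 : 0 <= Y.
  apply: Rmult_le_pos; first by apply: pow_le; apply: pos_INR.
  apply: Rlt_le; apply: exp_pos.
have E : Y ^ K = INR ((K + 1) ^ (n * w * (b + s) * K) * M ^ (n * b * K * w + n * s * w))%N.
  rewrite /Y Rpow_mult_distr -pow_mult [in RHS]INR_muln ![in RHS]INR_expn; congr (_ * _).
  rewrite -Rpower_pow; last by apply: exp_pos.
  rewrite Rpower_mult -Rpower_pow //; congr (Rpower _ _).
  rewrite /K !INR_addn !INR_muln.
  have : INR a <> 0 by apply: not_0_INR; apply/eqP; rewrite -lt0n.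
  move=> h; field; exact h.
have E2 : ((K + 1) ^ (n * w * (b + s) * K) * M ^ (n * b * K * w + n * s * w))%N =
   ((K.+1 ^ (n * (b + s) * K) * M ^ (n * b * K) * M ^ (n * s)) ^ w)%N.
  by rewrite addn1 E2gen.
rewrite E2 in E.
have L : (INR x) ^ K <= Y ^ K by rewrite E -INR_expn; apply: le_INR; apply/leP.
case: (Rle_lt_dec (INR x) Y) => // hlt.
have := @pow_lt_strict Y (INR x) K Y0 hlt K0; lra.
Qed.

Theorem lemma2p2 (s A : nat) (hs : (0 < s)%N) (hA : (0 < A)%N) (x n : nat)
  (hx : (0 < x)%N) (hn : (0 < n)%N)
  (hdiv : (x %| A ^ n * (n `!) ^ s)%N) :
  (forall a : nat, (0 < a)%N ->
    INR x <= INR (a * omega x + 1)%N ^ (n * omega x * (maxexp A + s))%N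
             * Rpower (INR (A * n ^ s)%N)
                      (INR n * (INR (maxexp A * omega x)%N + INR s / INR a)))
  /\
  (A = 1%N -> forall a : nat, (0 < a)%N ->
    INR x <= INR (a * omega x + 1)%N ^ (n * omega x * s)%N
             * Rpower (INR (n ^ s)%N) (INR n * INR s / INR a)).
Proof.
split; first exact: part1.
move=> A1 a ha; have := @part1 s A hs hA x n hx hn hdiv a ha.
have b0 : maxexp A = 0%N.
  by rewrite A1 /maxexp (_ : primes 1 = [::]) // big_nil.
rewrite b0 A1 mul1n mul0n add0n INR_0 Rplus_0_l.
move=> h; rewrite /Rdiv Rmult_assoc; exact: h.
Qed.
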